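(* Let $\Gamma$ be a coloring and $\Omega$ a $k$-ordering of $T_{d,k}$, and let $\mathcal T$ be the initial $d$-simplex. Then $(T_{d,k},\Gamma,\Omega,\mathcal T)$ is an object of $\mathscr C_{d,k}$ and it is universal: for every object $(\widetilde Y,\widehat\gamma,\widehat\omega,\widehat{\mathfrak a}_0)$ of $\mathscr C_{d,k}$ there exists a unique morphism $(T_{d,k},\Gamma,\Omega,\mathcal T)\to(\widetilde Y,\widehat\gamma,\widehat\omega,\widehat{\mathfrak a}_0)$.
   Context: Fix $d,k\ge1$, write $[\![d]\!]=\{0,\dots,d\}$. Multicomplexes: a $d$-multicomplex is a triple $\widetilde X=(X,\mathsf m,\mathsf g)$ where $X$ is a $d$-dimensional simplicial complex on a countable vertex set, $\mathsf m:X\to\mathbb N$ equals $1$ on the empty cell and on vertices, the multicells are pairs $(\tau,r)$, $\tau\in X$, $1\le r\le\mathsf m(\tau)$ (dimension $\dim\tau$), and $\mathsf g$ assigns to each multicell $(\tau,r)$ and each codimension-one face $\sigma$ of $\tau$ a multicell $\mathsf g((\tau,r),\sigma)=(\sigma,s)$; containment $\preceq$ is the reflexive–transitive closure of ''$\mathfrak b=\mathsf g(\mathfrak a,\sigma)$''; consistency is required: if $(\sigma,s),(\sigma',s')$ have equal dimension, are contained in a common multicell, and $\rho=\sigma\cap\sigma'$ has codimension one in both, then $\mathsf g((\sigma,s),\rho)=\mathsf g((\sigma',s'),\rho)$. A simplicial complex is a multicomplex with $\mathsf m\equiv1$. $\widetilde X$ is pure if every multicell lies in a $d$-multicell; two $d$-multicells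 are neighbors if they contain a common $(d-1)$-multicell; $\widetilde X$ is $d$-lower path connected if any two $d$-multicells are joined by a chain of neighbors. For a $(d-1)$-multicell $\mathfrak b$, $\delta(\mathfrak b)$ is the set of $d$-multicells containing it and $\deg\mathfrak b=|\delta(\mathfrak b)|$. A coloring is a map $\gamma$ from vertices to $[\![d]\!]$ injective on every $d$-cell, extended to cells by $\gamma(\sigma)=\{\gamma(v):v\in\sigma\}$ and to multicells via their underlying cell. A $k$-ordering $\omega$ assigns to each $(d-1)$-multicell $\mathfrak b$ a homomorphism $\omega_{\mathfrak b}:\mathbb Z/k\mathbb Z\to\mathrm{Sym}(\delta(\mathfrak b))$ whose image acts transitively. The category $\mathscr C_{d,k}$ has as objects quartets $(\widetilde X,\gamma,\omega,\mathfrak a_0)$ with $\widetilde X$ a pure, colorable, $d$-lower path connected $d$-multicomplex all of whose $(d-1)$-multicells have degree $\le k$, $\gamma$ a coloring, $\omega$ a $k$-ordering, and $\mathfrak a_0$ a $d$-multicell (root). A morphism $(\widetilde X,\gamma,\omega,\mathfrak a_0)\to(\widetilde Y,\widehat\gamma,\widehat\omega,\widehat{\mathfrak a}_0)$ is a map $\widetilde\varphi$ from multicells of $\widetilde X$ to multicells of $\widetilde Y$ lying over a simplicial map $\varphi:X\to Y$ (the multicell $\widetilde\varphi((\sigma,r))$ lies over $\varphi(\sigma)$, with $\dim$ preserved), commuting with gluing ($\widetilde\varphi(\mathsf g(\mathfrak a,\sigma))=\mathsf g'(\widetilde\varphi(\mathfrak a),\varphi(\sigma))$), with $\widetilde\varphi(\mathfrak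 a_0)=\widehat{\mathfrak a}_0$, $\widehat\gamma\circ\widetilde\varphi=\gamma$, and $\widetilde\varphi(\omega_{\mathfrak b}(l).\mathfrak a)=\widehat\omega_{\widetilde\varphi(\mathfrak b)}(l).\widetilde\varphi(\mathfrak a)$ for all $\mathfrak b$, $\mathfrak a\in\delta(\mathfrak b)$, $l\in\mathbb Z/k\mathbb Z$. The $k$-regular $d$-dimensional arboreal complex $T_{d,k}$ is the simplicial complex obtained by starting from a single $d$-simplex $\mathcal T$, attaching to each of its $(d-1)$-faces $k-1$ new $d$-simplices each using a new vertex, and inductively attaching to each $(d-1)$-face created in the previous step $k-1$ new $d$-simplices each using a new vertex; $T_{d,k}$ is the union over all steps. *)

(* Defs.v *)
From Stdlib Require Import Relations.
From mathcomp Require Import all_boot.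
Set Implicit Arguments. Unset Strict Implicit. Unset Printing Implicit Defensive.

(* Cells.  Vertices are natural numbers (a countable vertex set); a cell   *)
(* (finite set of vertices) is represented canonically by the strictly     *)
(* increasing list of its vertices.  A cell of dimension n has size n+1;   *)
(* the empty cell has size 0 (dimension -1).                               *)
Definition cell := seq nat.

Definition codim1 (s t : cell) : Prop := size t = (size s).+1 /\ subseq s t.

Definition img (f : nat -> nat) (s : cell) : cell := sort leq (undup (map f s)).

Definition cap (s t : cell) : cell := [seq x <- s | x \in t].

Definition is_simplicial_complex (d : nat) (X : cell -> Prop) : Prop :=
  [/\ (forall s, X s -> sorted ltn s),
      X [::],
      (forall s t, X t -> subseq s t -> X s),
      (forall s, X s -> size s <= d.+1)
    & (exists s, X s /\ size s = d.+1)].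

(* Raw data of a multicomplex: cells X, multiplicity m, gluing g.           *)
(* g a sigma is the index s such that g(a, sigma) = (sigma, s).             *)
Definition mcell := (cell * nat)%type.

Record mcx := MCX {
  mcX : cell -> Prop;
  mcm : cell -> nat;
  mcg : mcell -> cell -> nat
}.

Definition is_mcell (M : mcx) (a : mcell) : Prop :=
  mcX M a.1 /\ 1 <= a.2 <= mcm M a.1.

Definition glue (M : mcx) (a : mcell) (s : cell) : mcell := (s, mcg M a s).

Definition gstep (M : mcx) (b a : mcell) : Prop :=
  is_mcell M a /\ exists s, codim1 s a.1 /\ b = glue M a s.

Definition contained (M : mcx) : relation mcell :=
  clos_refl_trans mcell (gstep M).

Definition is_multicomplex (d : nat) (M : mcx) : Prop :=
  [/\ is_simplicial_complex d (mcX M),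
      (forall t, mcX M t -> 1 <= mcm M t),
      mcm M [::] = 1,
      (forall v, mcX M [:: v] -> mcm M [:: v] = 1)
    & (forall a s, is_mcell M a -> codim1 s a.1 -> 1 <= mcg M a s <= mcm M s)] /\
      (forall a a' c rho,
         is_mcell M a -> is_mcell M a' -> is_mcell M c ->
         size a.1 = size a'.1 ->
         contained M a c -> contained M a' c ->
         rho = cap a.1 a'.1 -> codim1 rho a.1 -> codim1 rho a'.1 ->
         mcg M a rho = mcg M a' rho).

Definition top_mcell (d : nat) (M : mcx) (a : mcell) : Prop :=
  is_mcell M a /\ size a.1 = d.+1.
Definition facet_mcell (d : nat) (M : mcx) (b : mcell) : Prop :=
  is_mcell M b /\ size b.1 = d.

Definition delta (d : nat) (M : mcx) (b a : mcell) : Prop :=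
  top_mcell d M a /\ contained M b a.

Definition is_pure (d : nat) (M : mcx) : Prop :=
  forall a, is_mcell M a -> exists c, top_mcell d M c /\ contained M a c.

Definition neighbors (d : nat) (M : mcx) (a a' : mcell) : Prop :=
  top_mcell d M a /\ top_mcell d M a' /\
  exists b, facet_mcell d M b /\ contained M b a /\ contained M b a'.

Definition lower_path_connected (d : nat) (M : mcx) : Prop :=
  forall a a', top_mcell d M a -> top_mcell d M a' ->
    clos_refl_trans mcell (neighbors d M) a a'.

Definition degree_le (d k : nat) (M : mcx) : Prop :=
  forall b, facet_mcell d M b ->
    exists s : seq mcell, size s <= k /\ forall a, delta d M b a -> a \in s.

Definition is_coloring (d : nat) (M : mcx) (gam : nat -> nat) : Prop :=
  (forall v, mcX M [:: v] -> gam v <= d) /\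
  (forall s, mcX M s -> size s = d.+1 -> uniq (map gam s)).

Definition colorable (d : nat) (M : mcx) : Prop :=
  exists gam, is_coloring d M gam.

(* k-ordering.  om b l a = omega_b(l).a.  A homomorphism Z/kZ -> Sym(delta b)
   is encoded as a monoid homomorphism (nat,+) -> Sym(delta b) sending k to
   the identity (these correspond bijectively). *)
Definition ordering := mcell -> nat -> mcell -> mcell.

Definition is_k_ordering (d k : nat) (M : mcx) (om : ordering) : Prop :=
  forall b, facet_mcell d M b ->
    [/\ (forall l a, delta d M b a -> delta d M b (om b l a)),
        (forall a, delta d M b a -> om b 0 a = a),
        (forall l1 l2 a, delta d M b a -> om b (l1 + l2) a = om b l1 (om b l2 a)),
        (forall a, delta d M b a -> om b k a = a)
      & (forall a a', delta d M b a -> delta d M b a' -> exists l, om b l a = a')].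

Definition is_object (d k : nat) (M : mcx) (gam : nat -> nat) (om : ordering)
    (a0 : mcell) : Prop :=
  [/\ is_multicomplex d M, is_pure d M, colorable d M,
      lower_path_connected d M & degree_le d k M] /\
  [/\ is_coloring d M gam, is_k_ordering d k M om & top_mcell d M a0].

Definition is_morphism (d k : nat)
    (M : mcx) (gam : nat -> nat) (om : ordering) (a0 : mcell)
    (N : mcx) (gam' : nat -> nat) (om' : ordering) (b0 : mcell)
    (phi : mcell -> mcell) : Prop :=
  exists f : nat -> nat,
  [/\
      (forall s, mcX M s -> mcX N (img f s)),
      (forall a, is_mcell M a ->
         [/\ is_mcell N (phi a), (phi a).1 = img f a.1 & size (phi a).1 = size a.1]),
      (forall a s, is_mcell M a -> codim1 s a.1 ->
         phi (glue M a s) = glue N (phi a) (img f s))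
    & phi a0 = b0] /\
  (
      (forall a, is_mcell M a -> img gam' (phi a).1 = img gam a.1) /\
      (forall b a l, facet_mcell d M b -> delta d M b a ->
         phi (om b l a) = om' (phi b) l (phi a))).

(* Initial simplex on vertices 0..d.  The new vertex used for the j-th      *)
(* (1 <= j <= k-1) simplex attached to the face F is d+1+pickle(F,j).       *)
Definition Tbase (d : nat) : cell := iota 0 d.+1.
Definition fresh (d : nat) (F : cell) (j : nat) : nat := d.+1 + pickle (F, j).
Definition attach (d : nat) (F : cell) (j : nat) : cell := sort leq (fresh d F j :: F).

Inductive Tface (d k : nat) : cell -> Prop :=
| Tface0 F : codim1 F (Tbase d) -> Tface d k F
| TfaceS F j F' : Tface d k F -> 1 <= j < k ->
    codim1 F' (attach d F j) -> fresh d F j \in F' -> Tface d k F'.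

Inductive Ttop (d k : nat) : cell -> Prop :=
| Ttop0 : Ttop d k (Tbase d)
| TtopS F j : Tface d k F -> 1 <= j < k -> Ttop d k (attach d F j).

Definition Tcell (d k : nat) (s : cell) : Prop :=
  exists t, Ttop d k t /\ subseq s t.

Definition Tmc (d k : nat) : mcx := MCX (Tcell d k) (fun _ => 1) (fun _ _ => 1).

Definition Tinit (d : nat) : mcell := (Tbase d, 1).

(* Main.v *)
Require Import Defs.
From Stdlib Require Import Relations ClassicalEpsilon.
From mathcomp Require Import all_boot zify.
Set Implicit Arguments. Unset Strict Implicit. Unset Printing Implicit Defensive.

Lemma ltn_sorted_eq (s1 s2 : seq nat) :
  sorted ltn s1 -> sorted ltn s2 -> s1 =i s2 -> s1 = s2.
Proof. apply: irr_sorted_eq; [exact: ltn_trans | exact: ltnn]. Qed.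

Lemma sorted_ltn_uniq (s : seq nat) : sorted ltn s -> uniq s.
Proof. by rewrite ltn_sorted_uniq_leq => /andP[]. Qed.

Lemma img_sorted f s : sorted ltn (img f s).
Proof.
rewrite ltn_sorted_uniq_leq /img sort_sorted ?andbT; last exact: leq_total.
by rewrite sort_uniq undup_uniq.
Qed.

Lemma mem_img f s x : (x \in img f s) = (x \in map f s).
Proof. by rewrite /img mem_sort mem_undup. Qed.

Lemma subset_subseq (s t : seq nat) :
  sorted ltn s -> sorted ltn t -> {subset s <= t} -> subseq s t.
Proof.
move=> ss st sst.
have -> : s = [seq x <- t | x \in s].
  apply: ltn_sorted_eq => //; first by apply: sorted_filter => //; exact: ltn_trans.
  by move=> x; rewrite mem_filter; case xs: (x \in s); rewrite ?andbF //= sst.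
exact: filter_subseq.
Qed.

Lemma sorted_subseq (s t : seq nat) : subseq s t -> sorted ltn t -> sorted ltn s.
Proof. apply: subseq_sorted; exact: ltn_trans. Qed.

Lemma subseq_size_eq (T : eqType) (s t : seq T) :
  subseq s t -> size t <= size s -> s = t.
Proof. by move=> st le; apply/eqP; rewrite -(size_subseq_leqif st); apply/eqP/anti_leq; rewrite le size_subseq. Qed.

Lemma uniq_subset_size_eq (T : eqType) (s t : seq T) :
  uniq s -> {subset s <= t} -> size t <= size s -> s =i t.
Proof. by move=> us st le; case: (uniq_min_size us st le). Qed.

Lemma codim1_chain (T : eqType) (s t : seq T) :
  subseq s t -> size s < size t -> exists t', size t = (size t').+1 /\ subseq t' t /\ subseq s t'.
Proof.
elim: t s => [|y t IH] [|x s] //=.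
  move=> _ _; exists t; split=> //; split; [exact: subseq_cons | exact: sub0seq].
case: eqP => [-> | nxy] st ltst.
  have [t' [e [h1 h2]]] := IH _ st ltst.
  by exists (y :: t'); rewrite /= e; split=> //; split=> //=; rewrite eqxx.
exists t; split=> //; split; first exact: subseq_cons.
by [].
Qed.

Definition maxs (s : seq nat) := foldr maxn 0 s.
Lemma maxs_ub s x : x \in s -> x <= maxs s.
Proof.
elim: s => //= y s IH; rewrite in_cons => /orP[/eqP-> | /IH h]; first exact: leq_maxl.
exact: leq_trans h (leq_maxr _ _).
Qed.
Lemma maxs_mem s : s != [::] -> maxs s \in s.
Proof.
elim: s => //= y s IH _; rewrite in_cons.
case: s IH => [|z s] IH /=; first by rewrite maxn0 eqxx.
have := IH isT; rewrite /maxn; case: ltnP => _ h; first by rewrite h orbT.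
by rewrite eqxx.
Qed.

Lemma img_eq_in f g s : {in s, f =1 g} -> img f s = img g s.
Proof. by move=> /eq_in_map h; rewrite /img h. Qed.

Lemma img_comp f g s : img g (img f s) = img (g \o f) s.
Proof.
apply: ltn_sorted_eq; try exact: img_sorted.
move=> x; rewrite !mem_img map_comp; apply/mapP/mapP => [][y yi ->]; exists y => //.
  by rewrite mem_img in yi. by rewrite mem_img.
Qed.

Lemma size_img f s : uniq s -> {in s &, injective f} -> size (img f s) = size s.
Proof.
move=> us fi; rewrite /img size_sort undup_id ?size_map //.
by rewrite map_inj_in_uniq.
Qed.

Lemma img_sorted_id f s : sorted ltn s -> {in s, f =1 id} -> img f s = s.
Proof.
move=> ss h; apply: ltn_sorted_eq; rewrite ?img_sorted // => x.
by move: h => /eq_in_map h; rewrite mem_img h map_id.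
Qed.

Lemma subseq_mem (T : eqType) (s t : seq T) x : subseq s t -> x \in s -> x \in t.
Proof. by move=> /mem_subseq h /h. Qed.

Lemma inj_sub (f : nat -> nat) (s t : seq nat) : subseq s t -> {in t &, injective f} -> {in s &, injective f}.
Proof. by move=> st h x y xs ys; apply: h; apply: (subseq_mem st). Qed.
Section MC.
Variables (d : nat) (M : mcx).
Hypothesis hM : is_multicomplex d M.

Lemma mc_sc : is_simplicial_complex d (mcX M).
Proof. by case: hM => [[]]. Qed.

Lemma mc_sorted s : mcX M s -> sorted ltn s.
Proof. by case: mc_sc => h _ _ _ _ /h. Qed.

Lemma mc_sub s t : mcX M t -> subseq s t -> mcX M s.
Proof. by case: mc_sc => _ _ h _ _ ht st; exact: h ht st. Qed.

Lemma gstep_sub b a : gstep M b a -> subseq b.1 a.1 /\ size a.1 = (size b.1).+1.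
Proof. by case=> _ [s [[e st] ->]]. Qed.

Lemma cont_1n b a : contained M b a -> b = a \/ exists c, gstep M b c /\ contained M c a.
Proof.
move=> h; case: (clos_rt_rt1n _ _ _ _ h); first by left.
move=> y z h1 h2; right; exists y; split=> //; exact/clos_rt_rt1n_iff.
Qed.

Lemma cont_sub b a : contained M b a -> subseq b.1 a.1.
Proof.
elim=> [x y /gstep_sub [] //| x | x y z _ h1 _ h2]; first exact: subseq_refl.
exact: subseq_trans h1 h2.
Qed.

Lemma cont_size b a : contained M b a -> b = a \/ size b.1 < size a.1.
Proof.
elim=> [x y /gstep_sub [_ ->]|x|x y z _ h1 _ h2]; [by right | by left |].
case: h1 => [->|h1] //; case: h2 => [<-|h2]; [by right | right; exact: ltn_trans h2].
Qed.

Lemma cont_eq b a : contained M b a -> size a.1 <= size b.1 -> b = a.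
Proof. by move/cont_size => [//|h] le; move: (leq_ltn_trans le h); rewrite ltnn. Qed.

Lemma gstep_mcell b a : gstep M b a -> is_mcell M b.
Proof.
case=> ma [s [[e st] ->]]; case: hM => [[_ _ _ _ hg] _]; split; last exact: hg.
by apply: mc_sub st; case: ma.
Qed.

Lemma cont_mcell b a : is_mcell M a -> contained M b a -> is_mcell M b.
Proof. by move=> ma /cont_1n [->|[c [/gstep_mcell h _]]]. Qed.

Lemma glue_gstep a s : is_mcell M a -> codim1 s a.1 -> gstep M (glue M a s) a.
Proof. by move=> ma cs; split=> //; exists s. Qed.

Lemma glue_mcell a s : is_mcell M a -> codim1 s a.1 -> is_mcell M (glue M a s).
Proof. by move=> ma cs; apply: gstep_mcell; exact: glue_gstep. Qed.

Lemma face_exists a C : is_mcell M a -> subseq C a.1 -> exists c, contained M c a /\ c.1 = C.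
Proof.
move=> ma; move eqn: (size a.1 - size C) => n; elim: n a ma eqn => [|n IH] a ma eqn sCa.
  exists a; split; first exact: rt_refl.
  by symmetry; apply: subseq_size_eq sCa _; rewrite -subn_eq0 eqn.
have lt : size C < size a.1 by rewrite -subn_gt0 eqn.
have [t' [e [h1 h2]]] := codim1_chain sCa lt.
have cs : codim1 t' a.1 by [].
have en : size (glue M a t').1 - size C = n.
  by move: eqn; rewrite e subSn ?(size_subseq h2) //; case.
have [c [cc ec]] := IH (glue M a t') (glue_mcell ma cs) en h2.
exists c; split=> //; apply: rt_trans cc _; apply: rt_step; exact: glue_gstep.
Qed.

Lemma cap_eq (A A' C : seq nat) : sorted ltn A -> sorted ltn A' ->
  subseq C A -> subseq C A' -> size A = (size C).+1 -> size A' = (size C).+1 ->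
  A <> A' -> cap A A' = C.
Proof.
move=> sA sA' cA cA' eA eA' nAA'.
have scap : sorted ltn (cap A A') by apply: sorted_filter => //; exact: ltn_trans.
have Ccap : {subset C <= cap A A'}.
  by move=> x xC; rewrite mem_filter (subseq_mem cA' xC) (subseq_mem cA xC).
have sz : size (cap A A') <= size C.
  have : size (cap A A') <= size A by rewrite size_filter count_size.
  rewrite leq_eqVlt eA ltnS => /orP[/eqP ecap|//]; exfalso; apply: nAA'.
  have capA : cap A A' = A by apply: subseq_size_eq; [exact: filter_subseq | rewrite ecap eA].
  apply: ltn_sorted_eq => //; apply: uniq_subset_size_eq; first exact: sorted_ltn_uniq.
    by move=> x xA; move: xA; rewrite -capA mem_filter => /andP[].
  by rewrite eA eA'.
have uC : uniq C by apply: sorted_ltn_uniq; exact: sorted_subseq cA sA.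
apply: ltn_sorted_eq => //; first exact: sorted_subseq cA sA.
by move=> x; rewrite (uniq_subset_size_eq uC Ccap sz).
Qed.

Lemma face_uniq c0 c c' : is_mcell M c0 -> contained M c c0 -> contained M c' c0 -> c.1 = c'.1 -> c = c'.
Proof.
move=> m0; move eqn: (size c0.1 - size c.1) => n.
elim: n c c' eqn => [|n IH] c c' eqn cc cc' e.
  have sc := size_subseq (cont_sub cc).
  have -> : c = c0 by apply: cont_eq cc _; rewrite -subn_eq0 eqn.
  by symmetry; apply: cont_eq cc' _; rewrite -e -subn_eq0 eqn.
case: (cont_1n cc) => [ec|[a [ga ca]]]; first by move: eqn; rewrite ec subnn.
case: (cont_1n cc') => [ec'|[a' [ga' ca']]].
  by move: eqn; rewrite e ec' subnn.
have [sa ea] := gstep_sub ga; have [sa' ea'] := gstep_sub ga'.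
have ma : is_mcell M a by case: ga. have ma' : is_mcell M a' by case: ga'.
have ena : size c0.1 - size a.1 = n by rewrite ea subnS eqn.
case: ga => _ [s [[es ss] ec]]; case: ga' => _ [s' [[es' ss'] ec']].
have se : s = c.1 by rewrite ec. have se' : s' = c.1 by rewrite e ec'.
case: (eqVneq a.1 a'.1) => [eaa | naa].
  have eq := IH a a' ena ca ca' eaa.
  have ss_ : s = s' by rewrite se se'.
  by rewrite ec ec' eq ss_.
have ss_ : s' = s by rewrite se se'.
rewrite ec ec' ss_ /glue; congr pair.
case: hM => _ hcons; apply: (hcons a a' c0 s) => //.
- by rewrite ea ea' e.
- rewrite se; symmetry; apply: cap_eq.
  + by apply: mc_sorted; case: ma.
  + by apply: mc_sorted; case: ma'.
  + by rewrite -se.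
  + by rewrite -se'.
  + by rewrite ea.
  + by rewrite ea' e.
  + by move=> h; rewrite h eqxx in naa.
- by rewrite -ss_; split.
Qed.

Definition face (x : mcell) (C : cell) : mcell :=
  epsilon (inhabits x) (fun c => contained M c x /\ c.1 = C).

Lemma face_spec x C : is_mcell M x -> subseq C x.1 -> contained M (face x C) x /\ (face x C).1 = C.
Proof.
move=> mx sC; apply: (epsilon_spec (inhabits x) (fun c => contained M c x /\ c.1 = C)).
exact: face_exists.
Qed.

Lemma faceU x c : is_mcell M x -> contained M c x -> face x c.1 = c.
Proof.
move=> mx cc; have [h1 h2] := face_spec mx (cont_sub cc).
exact: face_uniq mx h1 cc h2.
Qed.

End MC.

Lemma uniq_map_inj (T1 T2 : eqType) (f : T1 -> T2) (s : seq T1) x y :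
  uniq (map f s) -> x \in s -> y \in s -> f x = f y -> x = y.
Proof.
elim: s => //= z s IH /andP[nz us]; rewrite !in_cons.
case/orP=> [/eqP->|xs]; case/orP=> [/eqP->|ys] // e.
- by move: nz; rewrite e (map_f f ys).
- by move: nz; rewrite -e (map_f f xs).
- exact: IH.
Qed.

Section Col.
Variables (d : nat) (M : mcx) (gm : nat -> nat).
Hypothesis hM : is_multicomplex d M.
Hypothesis hc : is_coloring d M gm.

Definition colv (s : cell) (c : nat) := nth 0 [seq v <- s | gm v == c] 0.

Lemma col_le s v : mcX M s -> v \in s -> gm v <= d.
Proof.
move=> ms vs; case: hc => h _; apply: h; apply: (mc_sub hM ms).
by rewrite sub1seq.
Qed.

Lemma col_uniq s : mcX M s -> size s = d.+1 -> uniq (map gm s).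
Proof. by case: hc => _ h; apply: h. Qed.

Lemma col_all s c : mcX M s -> size s = d.+1 -> c <= d -> c \in map gm s.
Proof.
move=> ms es cd.
have h : map gm s =i iota 0 d.+1.
  apply: uniq_subset_size_eq; first exact: col_uniq.
    by move=> x /mapP[v vs ->]; rewrite mem_iota /= add0n ltnS (col_le ms vs).
  by rewrite size_iota size_map es.
by rewrite h mem_iota add0n ltnS cd.
Qed.

Lemma colv_spec s c : mcX M s -> size s = d.+1 -> c <= d ->
  colv s c \in s /\ gm (colv s c) = c.
Proof.
move=> ms es cd; have /mapP[v vs ev] := col_all ms es cd.
have hf : 0 < size [seq v <- s | gm v == c].
  by rewrite size_filter -has_count; apply/hasP; exists v; rewrite // ev.
have := mem_nth 0 hf; rewrite mem_filter => /andP[/eqP e h]; by split.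
Qed.

Lemma colv_eq s v : mcX M s -> size s = d.+1 -> v \in s -> colv s (gm v) = v.
Proof.
move=> ms es vs; have [h1 h2] := colv_spec ms es (col_le ms vs).
exact: (uniq_map_inj (col_uniq ms es) h1 vs h2).
Qed.

Lemma colv_unique s v c : mcX M s -> size s = d.+1 -> v \in s -> gm v = c -> colv s c = v.
Proof. by move=> ms es vs <-; exact: colv_eq. Qed.

End Col.

Lemma code_gt x s : x \in s -> x < CodeSeq.code s.
Proof.
elim: s => //= y s IH; rewrite in_cons => /orP[/eqP->|/IH h].
  apply: (leq_trans (ltn_expl y (isT : 1 < 2))); rewrite -{1}(muln1 (2 ^ y)).
  by rewrite leq_mul2l ltn0Sn orbT.
apply: (leq_trans h); apply: (leq_trans (leqnSn _)).
rewrite -[(CodeSeq.code s).+1]mul1n; apply: leq_mul; first by rewrite expn_gt0.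
by rewrite ltnS -addnn leq_addr.
Qed.

Section TT.
Variables (d k : nat).

Lemma pickle_pair (F : seq nat) (j : nat) :
  pickle (F,j) = CodeSeq.code [:: CodeSeq.code (map id F); j].
Proof. reflexivity. Qed.

Lemma fresh_gt F j x : x \in F -> x < fresh d F j.
Proof.
move=> xF; rewrite /fresh pickle_pair; apply: (leq_trans _ (leq_addl _ _)).
apply: (ltn_trans (code_gt (s := map id F) _)); first by rewrite map_id.
by apply: code_gt; rewrite in_cons eqxx.
Qed.

Lemma fresh_gtd F j : d < fresh d F j.
Proof. by rewrite /fresh addSn ltnS leq_addr. Qed.

Lemma fresh_inj F j F' j' : fresh d F j = fresh d F' j' -> F = F' /\ j = j'.
Proof. by move/addnI/(pcan_inj pickleK) => [-> ->]. Qed.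

Lemma fresh_notin F j : fresh d F j \notin F.
Proof. by apply/negP => /(fresh_gt j); rewrite ltnn. Qed.

Lemma mem_attach F j y : (y \in attach d F j) = (y == fresh d F j) || (y \in F).
Proof. by rewrite /attach mem_sort in_cons. Qed.

Lemma attach_sorted F j : sorted ltn F -> sorted ltn (attach d F j).
Proof.
move=> sF; rewrite ltn_sorted_uniq_leq sort_sorted ?andbT; last exact: leq_total.
by rewrite sort_uniq /= fresh_notin sorted_ltn_uniq.
Qed.

Lemma size_attach F j : size (attach d F j) = (size F).+1.
Proof. by rewrite /attach size_sort. Qed.

Lemma attach_inj F j F' j' : attach d F j = attach d F' j' -> F = F' /\ j = j'.
Proof.
move=> e.
have h1 : fresh d F j \in attach d F' j' by rewrite -e mem_attach eqxx.
have h2 : fresh d F' j' \in attach d F j by rewrite e mem_attach eqxx.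
rewrite mem_attach in h1; rewrite mem_attach in h2.
case/orP: h1 => [/eqP/fresh_inj //|/(fresh_gt j') l1].
case/orP: h2 => [/eqP/esym/fresh_inj //|/(fresh_gt j) l2].
by move: (ltn_trans l1 l2); rewrite ltnn.
Qed.

Lemma mem_Tbase x : (x \in Tbase d) = (x <= d).
Proof. by rewrite mem_iota add0n ltnS. Qed.

Lemma Tbase_sorted : sorted ltn (Tbase d).
Proof. exact: iota_ltn_sorted. Qed.

Lemma size_Tbase : size (Tbase d) = d.+1.
Proof. by rewrite size_iota. Qed.

Lemma fresh_notTbase F j : fresh d F j \notin Tbase d.
Proof. by rewrite mem_Tbase -ltnNge fresh_gtd. Qed.

Lemma attach_neq_Tbase F j : attach d F j <> Tbase d.
Proof. by move=> e; move: (fresh_notTbase F j); rewrite -e mem_attach eqxx. Qed.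

Lemma Tface_inv F : Tface d k F -> sorted ltn F /\ size F = d.
Proof.
elim=> [G [e s] | G j G' _ [sG eG] _ [e s] _].
  split; first exact: sorted_subseq s Tbase_sorted.
  by move: e; rewrite size_Tbase => [[]].
split; first exact: sorted_subseq s (attach_sorted _ sG).
by move: e; rewrite size_attach eG => [[]].
Qed.

Lemma Ttop_inv t : Ttop d k t -> sorted ltn t /\ size t = d.+1.
Proof.
case=> [|F j hF _]; first by rewrite Tbase_sorted size_Tbase.
have [sF eF] := Tface_inv hF; by rewrite attach_sorted // size_attach eF.
Qed.

Lemma Tcell_sorted s : Tcell d k s -> sorted ltn s.
Proof. by case=> t [/Ttop_inv [st _] ss]; exact: sorted_subseq ss st. Qed.

Lemma face_of_attach F j F' : sorted ltn F -> size F = d ->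
  codim1 F' (attach d F j) -> F' = F \/ fresh d F j \in F'.
Proof.
move=> sF eF [e s]; case fF: (fresh d F j \in F'); [by right | left].
have sF' : sorted ltn F' := sorted_subseq s (attach_sorted _ sF).
apply: ltn_sorted_eq => //; apply: uniq_subset_size_eq.
- exact: sorted_ltn_uniq.
- move=> x xF'; have := subseq_mem s xF'; rewrite mem_attach => /orP[/eqP ex|//].
  by move: xF'; rewrite ex fF.
- by move: e; rewrite size_attach eF => [[<-]].
Qed.

Definition ParT (F p : cell) : Prop :=
  (p = Tbase d /\ codim1 F (Tbase d)) \/
  (exists G j, [/\ Tface d k G, 1 <= j < k, p = attach d G j, codim1 F p & fresh d G j \in F]).

Lemma Tface_par F : Tface d k F -> exists p, ParT F p.
Proof.
case=> [G h | G j G' hG hj h hf]; first by exists (Tbase d); left.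
by exists (attach d G j); right; exists G, j.
Qed.

Lemma par_top F p : ParT F p -> Ttop d k p /\ codim1 F p.
Proof.
case=> [[-> h]|[G [j [hG hj -> h _]]]]; first by split=> //; constructor.
by split=> //; constructor.
Qed.

Lemma codim1_of_sub F t : size F = d -> size t = d.+1 -> subseq F t -> codim1 F t.
Proof. by move=> e1 e2 s; split=> //; rewrite e1 e2. Qed.

Lemma Tbase_sub_small F : subseq F (Tbase d) -> forall x, x \in F -> x <= d.
Proof. by move=> s x /(subseq_mem s); rewrite mem_Tbase. Qed.

Lemma tops_of_face F p t : Tface d k F -> ParT F p -> Ttop d k t -> subseq F t ->
  t = p \/ exists j, 1 <= j < k /\ t = attach d F j.
Proof.
move=> hF hp ht sFt; have [sF eF] := Tface_inv hF.
case: ht sFt => [|F' j' hF' hj'] sFt.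
  case: hp => [[-> _]|[G [j [_ _ _ _ hf]]]]; first by left.
  by move: (Tbase_sub_small sFt hf); rewrite leqNgt fresh_gtd.
have [sF' eF'] := Tface_inv hF'.
have cF : codim1 F (attach d F' j') by apply: codim1_of_sub; rewrite // size_attach eF'.
case: (face_of_attach sF' eF' cF) => [->|hf']; first by right; exists j'.
case: hp => [[-> [_ sb]]|[G [j [hG hj ep [_ sp] hf]]]].
  by move: (Tbase_sub_small sb hf'); rewrite leqNgt fresh_gtd.
have a1 := subseq_mem sFt hf; rewrite mem_attach in a1.
case/orP: a1 => [/eqP/fresh_inj [eG ej]|l1]; first by left; rewrite ep eG ej.
have a2 := subseq_mem sp hf'; rewrite ep mem_attach in a2.
case/orP: a2 => [/eqP/fresh_inj [eG ej]|l2]; first by left; rewrite ep eG ej.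
by move: (ltn_trans (fresh_gt j' l1) (fresh_gt j l2)); rewrite ltnn.
Qed.

Lemma facet_Tface F : Tcell d k F -> size F = d -> Tface d k F.
Proof.
case=> t [ht sFt] eF; case: ht sFt => [|G j hG hj] sFt.
  by constructor; apply: codim1_of_sub; rewrite ?size_Tbase.
have [sG eG] := Tface_inv hG.
have cF : codim1 F (attach d G j) by apply: codim1_of_sub; rewrite // size_attach eG.
case: (face_of_attach sG eG cF) => [->//|hf].
exact: (TfaceS hG hj cF hf).
Qed.

Lemma top_Tcell t : Tcell d k t -> size t = d.+1 -> Ttop d k t.
Proof.
case=> t' [ht' s] e; have [_ e'] := Ttop_inv ht'.
by have -> : t = t' by apply: subseq_size_eq; rewrite ?e ?e'.
Qed.

Lemma Ttop_Tcell t : Ttop d k t -> Tcell d k t.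
Proof. by move=> h; exists t; split=> //; exact: subseq_refl. Qed.

Definition Tnbr (F p : cell) : seq cell := p :: map (attach d F) (iota 1 k.-1).

Lemma Tnbr_size F p : 1 <= k -> size (Tnbr F p) = k.
Proof. by move=> k1; rewrite /= size_map size_iota prednK. Qed.

Lemma Tnbr_uniq F p : Tface d k F -> ParT F p -> uniq (Tnbr F p).
Proof.
move=> hF hp /=; apply/andP; split.
  apply/mapP => [[j _ e]]; case: hp => [[ep _]|[G [i [_ _ ep _ hf]]]].
    by apply: (@attach_neq_Tbase F j); rewrite -e ep.
  by rewrite ep in e; have [eG _] := attach_inj e; move: hf; rewrite eG (negbTE (fresh_notin _ _)).
rewrite map_inj_in_uniq ?iota_uniq // => i j _ _ /attach_inj []//.
Qed.

Lemma Tnbr_mem F p t : Tface d k F -> ParT F p -> Ttop d k t -> subseq F t -> t \in Tnbr F p.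
Proof.
move=> hF hp ht sFt; case: (tops_of_face hF hp ht sFt) => [->|[j [hj ->]]].
  by rewrite in_cons eqxx.
rewrite in_cons; apply/orP; right; apply/mapP; exists j => //.
rewrite mem_iota; case/andP: hj => h1 h2; rewrite h1 /= add1n prednK //.
exact: ltn_trans h1 h2.
Qed.

Lemma Tnbr_top F p t : Tface d k F -> ParT F p -> t \in Tnbr F p -> Ttop d k t /\ subseq F t.
Proof.
move=> hF hp; rewrite in_cons => /orP[/eqP->|/mapP[j jin ->]].
  by have [h [_ s]] := par_top hp.
have hj : 1 <= j < k.
  by move: jin; rewrite mem_iota => /andP[h1 h2]; apply/andP; split; lia.
split; first exact: TtopS.
apply: subset_subseq; first by case: (Tface_inv hF).
  by apply: attach_sorted; case: (Tface_inv hF).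
by move=> x xF; rewrite mem_attach xF orbT.
Qed.

End TT.

Lemma crt_sym (A : Type) (R : relation A) : (forall x y, R x y -> R y x) ->
  forall x y, clos_refl_trans A R x y -> clos_refl_trans A R y x.
Proof.
move=> hs x y; elim=> [a b /hs h|a|a b c _ h1 _ h2]; first exact: rt_step.
  exact: rt_refl. exact: rt_trans h2 h1.
Qed.

Section TMC.
Variables (d k : nat).
Hypothesis k1 : 1 <= k.

Notation T := (Tmc d k).

Lemma Tmc_mcell a : is_mcell T a <-> Tcell d k a.1 /\ a.2 = 1.
Proof.
rewrite /is_mcell /=; split=> [[h1 h2]|[h1 h2]]; split=> //; last by rewrite h2.
by apply/eqP; rewrite eqn_leq andbC.
Qed.

Lemma Tmc_multi : is_multicomplex d T.
Proof.
split; last by [].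
split=> //=.
- split=> //=.
  + exact: Tcell_sorted.
  + by exists (Tbase d); split; [constructor | exact: sub0seq].
  + by move=> s t [u [hu tu]] st; exists u; split=> //; exact: subseq_trans st tu.
  + by move=> s [u [/Ttop_inv [_ e] su]]; rewrite -e size_subseq.
  + exists (Tbase d); split; last exact: size_Tbase.
    by exists (Tbase d); split; [constructor | exact: subseq_refl].
Qed.

Lemma T_cont s t : Tcell d k t -> subseq s t -> contained T (s,1) (t,1).
Proof.
move=> ht st; have mt : is_mcell T (t,1) by apply/Tmc_mcell.
have [c [cc ec]] := face_exists Tmc_multi mt st.
have /Tmc_mcell [_ e2] := cont_mcell Tmc_multi mt cc.
by have <- : c = (s,1) by case: c cc ec e2 => /= ? ? ? -> ->.
Qed.

Lemma T_top a : top_mcell d T a <-> Ttop d k a.1 /\ a.2 = 1.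
Proof.
split=> [[/Tmc_mcell [h1 h2] e]|[h1 h2]]; first by split=> //; exact: top_Tcell.
by split; [apply/Tmc_mcell; split=> //; exact: Ttop_Tcell | case: (Ttop_inv h1)].
Qed.

Lemma T_delta F a : facet_mcell d T (F,1) ->
  (delta d T (F,1) a <-> Ttop d k a.1 /\ a.2 = 1 /\ subseq F a.1).
Proof.
move=> hF; split=> [[/T_top [h1 h2] c]|[h1 [h2 h3]]].
  by split=> //; split=> //; exact: (cont_sub c).
split; first by apply/T_top.
case: a h1 h2 h3 => t r /= h1 -> h3; apply: T_cont => //; exact: Ttop_Tcell.
Qed.

Lemma T_facet b : facet_mcell d T b -> Tface d k b.1 /\ b.2 = 1.
Proof. by case=> /Tmc_mcell [h1 h2] e; split=> //; exact: facet_Tface. Qed.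

Lemma Tface_facet F : Tface d k F -> facet_mcell d T (F,1).
Proof.
move=> hF; have [p hp] := Tface_par hF; have [hp1 [_ s]] := par_top hp.
split; last by case: (Tface_inv hF).
by apply/Tmc_mcell; split=> //; exists p.
Qed.

Lemma T_pure : is_pure d T.
Proof.
move=> a /Tmc_mcell [[t [ht st]] e2]; exists (t,1); split; first by apply/T_top.
by case: a st e2 => s r /= st ->; apply: T_cont => //; exact: Ttop_Tcell.
Qed.

Lemma T_degree : degree_le d k T.
Proof.
move=> b hb; have [hF e2] := T_facet hb; case: b hb hF e2 => F r hb /= hF e2; subst r.
have [p hp] := Tface_par hF.
exists (map (fun t => (t,1)) (Tnbr d k F p)); split; first by rewrite size_map Tnbr_size.
move=> a /(T_delta a hb) [h1 [h2 h3]]; case: a h1 h2 h3 => t r /= h1 -> h3.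
have H : forall s : seq cell, t \in s -> ((t,1) : mcell) \in map (fun t => ((t,1) : mcell)) s.
  by move=> s ts; apply/mapP; exists t.
exact: H _ (Tnbr_mem hF hp h1 h3).
Qed.

Lemma T_nb F p t : Tface d k F -> Ttop d k p -> subseq F p -> Ttop d k t -> subseq F t ->
  neighbors d T (t,1) (p,1).
Proof.
move=> hF hp sp ht st; split; first by apply/T_top.
split; first by apply/T_top.
exists (F,1); split; first exact: Tface_facet.
by split; apply: T_cont => //; exact: Ttop_Tcell.
Qed.

Lemma Tface_conn F : Tface d k F -> exists p, ParT d k F p /\
  clos_refl_trans mcell (neighbors d T) (p,1) (Tinit d).
Proof.
elim=> [G h|G j G' hG [p [hp c]] hj h hf].
  by exists (Tbase d); split; [left | exact: rt_refl].
exists (attach d G j); split; first by right; exists G, j.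
apply: rt_trans c; apply: rt_step; have [tp [_ sp]] := par_top hp.
apply: (T_nb hG tp sp _ _); first exact: TtopS hG hj.
apply: subset_subseq; try by case: (Tface_inv hG).
  by apply: attach_sorted; case: (Tface_inv hG).
by move=> x xG; rewrite mem_attach xG orbT.
Qed.

Lemma Ttop_conn t : Ttop d k t -> clos_refl_trans mcell (neighbors d T) (t,1) (Tinit d).
Proof.
case=> [|F j hF hj]; first exact: rt_refl.
have [p [hp c]] := Tface_conn hF; apply: rt_trans c; apply: rt_step.
have [tp [_ sp]] := par_top hp.
apply: (T_nb hF tp sp _ _); first exact: TtopS hF hj.
apply: subset_subseq; try by case: (Tface_inv hF).
  by apply: attach_sorted; case: (Tface_inv hF).
by move=> x xG; rewrite mem_attach xG orbT.
Qed.

Lemma T_lpc : lower_path_connected d T.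
Proof.
move=> a a' /T_top [h1 h2] /T_top [h1' h2'].
case: a h1 h2 => t r /= h1 ->; case: a' h1' h2' => t' r' /= h1' ->.
apply: rt_trans (Ttop_conn h1) _; apply: crt_sym (Ttop_conn h1').
by move=> x y [h [h' [b [hb [c1 c2]]]]]; split=> //; split=> //; exists b.
Qed.

End TMC.

Section Ord.
Variables (d k : nat) (M : mcx) (om : ordering).
Hypothesis ho : is_k_ordering d k M om.

Lemma om_delta b l a : facet_mcell d M b -> delta d M b a -> delta d M b (om b l a).
Proof. by move=> hb; case: (ho hb) => h *; apply: h. Qed.

Lemma om_add b l1 l2 a : facet_mcell d M b -> delta d M b a -> om b (l1 + l2) a = om b l1 (om b l2 a).
Proof. by move=> hb; case: (ho hb) => _ _ h _ _; apply: h. Qed.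

Lemma om_0 b a : facet_mcell d M b -> delta d M b a -> om b 0 a = a.
Proof. by move=> hb; case: (ho hb) => _ h *; apply: h. Qed.

Lemma om_trans b a a' : facet_mcell d M b -> delta d M b a -> delta d M b a' -> exists l, om b l a = a'.
Proof. by move=> hb; case: (ho hb) => _ _ _ _ h; apply: h. Qed.

Lemma om_mulk b n a : facet_mcell d M b -> delta d M b a -> om b (n * k) a = a.
Proof.
move=> hb ha; elim: n => [|n IH]; first by rewrite mul0n om_0.
case: (ho hb) => _ _ _ hk _.
by rewrite mulSn om_add // ?IH ?hk // ; apply: om_delta.
Qed.

Lemma om_mod b l a : facet_mcell d M b -> delta d M b a -> om b l a = om b (l %% k) a.
Proof.
move=> hb ha; rewrite {1}(divn_eq l k) addnC om_add //.
by rewrite [om b (_ * k) _]om_mulk //.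
Qed.

Lemma om_mod_eq b l1 l2 a : facet_mcell d M b -> delta d M b a ->
  l1 %% k = l2 %% k -> om b l1 a = om b l2 a.
Proof. by move=> hb ha e; rewrite (om_mod l1) // (om_mod l2) // e. Qed.

End Ord.

Section Univ.
Variables (d k : nat) (Gam : nat -> nat) (Om : ordering).
Hypotheses (k1 : 1 <= k) (hGam : is_coloring d (Tmc d k) Gam)
  (hOm : is_k_ordering d k (Tmc d k) Om).
Variables (N : mcx) (gam' : nat -> nat) (om' : ordering) (b0 : mcell).
Hypothesis hN : is_object d k N gam' om' b0.

Notation T := (Tmc d k).

Lemma hNm : is_multicomplex d N. Proof. by case: hN => [[]]. Qed.
Lemma hNc : is_coloring d N gam'. Proof. by case: hN => _ []. Qed.
Lemma hNo : is_k_ordering d k N om'. Proof. by case: hN => _ []. Qed.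
Lemma hb0 : top_mcell d N b0. Proof. by case: hN => _ []. Qed.
Let hTm := Tmc_multi d k.

Lemma Ttop_mcX t : Ttop d k t -> mcX T t. Proof. exact: Ttop_Tcell. Qed.

Lemma top_mcX x : top_mcell d N x -> mcX N x.1. Proof. by case=> [[]]. Qed.

Lemma RegT F p l1 l2 : Tface d k F -> ParT d k F p ->
  Om (F,1) l1 (p,1) = Om (F,1) l2 (p,1) -> l1 %% k = l2 %% k.
Proof.
move=> hF hp e.
have hb := Tface_facet hF.
have [tp [_ sp]] := par_top hp.
have dp : delta d T (F,1) (p,1) by apply/(T_delta (p,1) hb).
pose g i := (Om (F,1) i (p,1)).1.
have sub : {subset Tnbr d k F p <= map g (iota 0 k)}.
  move=> t tin; have [tt st] := Tnbr_top hF hp tin.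
  have dt : delta d T (F,1) (t,1) by apply/(T_delta (t,1) hb).
  have [l hl] := om_trans hOm hb dp dt.
  apply/mapP; exists (l %% k); first by rewrite mem_iota add0n ltn_mod k1.
  by rewrite /g -(om_mod hOm) // hl.
have um : uniq (map g (iota 0 k)).
  apply: leq_size_uniq (Tnbr_uniq hF hp) sub _.
  by rewrite size_map size_iota Tnbr_size.
apply: (uniq_map_inj um); rewrite ?mem_iota ?add0n ?ltn_mod //.
by rewrite /g -!(om_mod hOm) // e.
Qed.

Definition colface (x F : cell) := [seq v <- x | gam' v \in map Gam F].
Definition Bof (x : mcell) (F : cell) : mcell := glue N x (colface x.1 F).

Lemma Gam_face_uniq F p : ParT d k F p -> uniq (map Gam F).
Proof.
move=> hp; have [tp [_ sp]] := par_top hp; have [_ ep] := Ttop_inv tp.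
apply: subseq_uniq (map_subseq Gam sp) _; exact: (col_uniq hGam (Ttop_mcX tp) ep).
Qed.

Lemma Gam_face_le F p v : ParT d k F p -> v \in F -> Gam v <= d.
Proof.
move=> hp vF; have [tp [_ sp]] := par_top hp.
exact: (col_le hTm hGam (Ttop_mcX tp) (subseq_mem sp vF)).
Qed.

Lemma colface_codim1 x F p : top_mcell d N x -> Tface d k F -> ParT d k F p ->
  codim1 (colface x.1 F) x.1.
Proof.
move=> [mx ex] hF hp; split; last exact: filter_subseq.
rewrite ex; congr S.
have [_ eF] := Tface_inv hF.
rewrite -(size_map gam') /colface -filter_map -eF -(size_map Gam F).
apply: perm_size; apply: uniq_perm.
- exact: Gam_face_uniq hp.
- apply: filter_uniq; apply: (col_uniq hNc (top_mcX (conj mx ex)) ex).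
move=> c; rewrite mem_filter; apply/idP/andP => [cin|[]//]; split=> //.
case/mapP: cin => v vF ->; apply: (col_all hNm hNc (top_mcX (conj mx ex)) ex).
exact: Gam_face_le hp vF.
Qed.

Lemma Bof_props x F p : top_mcell d N x -> Tface d k F -> ParT d k F p ->
  [/\ facet_mcell d N (Bof x F), gstep N (Bof x F) x & delta d N (Bof x F) x].
Proof.
move=> hx hF hp; have c1 := colface_codim1 hx hF hp.
have g : gstep N (Bof x F) x by apply: glue_gstep; case: hx.
split=> //; last by split=> //; exact: rt_step.
split.
exact: (gstep_mcell hNm g).
case: c1 => e _; case: hx => _ ex; move: e; rewrite ex /=; by case.
Qed.

Inductive ImgT : cell -> mcell -> Prop :=
| ImgT0 : ImgT (Tbase d) b0
| ImgTS F p x j l : ImgF F p x -> 1 <= j < k ->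
    Om (F,1) l (p,1) = (attach d F j, 1) -> ImgT (attach d F j) (om' (Bof x F) l x)
with ImgF : cell -> cell -> mcell -> Prop :=
| ImgF0 F : codim1 F (Tbase d) -> ImgF F (Tbase d) b0
| ImgFS F j F' y : ImgT (attach d F j) y -> Tface d k F -> 1 <= j < k ->
    codim1 F' (attach d F j) -> fresh d F j \in F' -> ImgF F' (attach d F j) y.

Scheme ImgT_mut := Induction for ImgT Sort Prop
with ImgF_mut := Induction for ImgF Sort Prop.

Lemma Img_props :
  (forall t x, ImgT t x -> Ttop d k t /\ top_mcell d N x) /\
  (forall F p x, ImgF F p x -> [/\ Tface d k F, ParT d k F p, top_mcell d N x & ImgT p x]).
Proof.
pose P := fun t x (_ : ImgT t x) => Ttop d k t /\ top_mcell d N x.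
pose P0 := fun F p x (_ : ImgF F p x) => [/\ Tface d k F, ParT d k F p, top_mcell d N x & ImgT p x].
have c1 : P (Tbase d) b0 ImgT0 by split; [constructor | exact: hb0].
have c2 : forall F p x j l (i : ImgF F p x), P0 F p x i -> forall (i0 : 0 < j < k) (e : Om (F, 1) l (p, 1) = (attach d F j, 1)),
        P (attach d F j) (om' (Bof x F) l x) (ImgTS i i0 e).
  move=> F p x j l hi [hF hp hx _] hj hl; split; first exact: TtopS.
  have [fb _ db] := Bof_props hx hF hp.
  by case: (om_delta hNo l fb db).
have c3 : forall F (c : codim1 F (Tbase d)), P0 F (Tbase d) b0 (ImgF0 c).
  by move=> F h; split; [constructor | left | exact: hb0 | constructor].
have c4 : forall F j F' y (i : ImgT (attach d F j) y), P (attach d F j) y i ->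
        forall (t : Tface d k F) (i0 : 0 < j < k) (c : codim1 F' (attach d F j)) (i1 : fresh d F j \in F'),
        P0 F' (attach d F j) y (ImgFS i t i0 c i1).
  move=> F j F' y hi [ht hy] hF hj h hf; split=> //.
  - exact: TfaceS hF hj h hf.
  - by right; exists F, j.
split; [exact (@ImgT_mut P P0 c1 c2 c3 c4) | exact (@ImgF_mut P P0 c1 c2 c3 c4)].
Qed.

Lemma ImgT_props t x : ImgT t x -> Ttop d k t /\ top_mcell d N x.
Proof. by case: Img_props => h _; apply: h. Qed.
Lemma ImgF_props F p x : ImgF F p x -> [/\ Tface d k F, ParT d k F p, top_mcell d N x & ImgT p x].
Proof. by case: Img_props => _ h; apply: h. Qed.

Lemma ImgT_inv t y : ImgT t y -> (t = Tbase d /\ y = b0) \/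
  exists F p x j l, [/\ ImgF F p x, 1 <= j < k, Om (F,1) l (p,1) = (attach d F j,1),
     t = attach d F j & y = om' (Bof x F) l x].
Proof. by case=> [|F p x j l hi hj hl]; [left | right; exists F, p, x, j, l]. Qed.

Lemma ImgF_inv F q y : ImgF F q y -> (q = Tbase d /\ y = b0 /\ codim1 F (Tbase d)) \/
  exists G j, q = attach d G j /\ [/\ ImgT (attach d G j) y, Tface d k G, 1 <= j < k,
     codim1 F (attach d G j) & fresh d G j \in F].
Proof. by case=> [c|G j F' y' hi hG hj hc hf]; [left | right; exists G, j]. Qed.

Lemma fresh_par F j G i F' : codim1 F' (attach d F j) -> fresh d F j \in F' ->
  codim1 F' (attach d G i) -> fresh d G i \in F' -> F = G /\ j = i.
Proof.
move=> [_ s1] f1 [_ s2] f2.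
have a1 := subseq_mem s2 f1; rewrite mem_attach in a1.
case/orP: a1 => [/eqP/fresh_inj //|l1].
have a2 := subseq_mem s1 f2; rewrite mem_attach in a2.
case/orP: a2 => [/eqP/fresh_inj [-> ->] //|l2].
by move: (ltn_trans (fresh_gt d i l1) (fresh_gt d j l2)); rewrite ltnn.
Qed.

Lemma Tbase_no_fresh F G j : codim1 F (Tbase d) -> fresh d G j \in F -> False.
Proof.
by move=> [_ s] /(subseq_mem s); rewrite (negbTE (fresh_notTbase _ _ _)).
Qed.

Lemma Img_fun :
  (forall t x, ImgT t x -> forall y, ImgT t y -> x = y) /\
  (forall F p x, ImgF F p x -> forall q y, ImgF F q y -> p = q /\ x = y).
Proof.
pose P := fun t x (_ : ImgT t x) => forall y, ImgT t y -> x = y.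
pose P0 := fun F p x (_ : ImgF F p x) => forall q y, ImgF F q y -> p = q /\ x = y.
have c1 : P (Tbase d) b0 ImgT0.
  move=> y /ImgT_inv [[_ ->] //|[F [p [x [j [l [_ _ _ e _]]]]]]].
  by case: (@attach_neq_Tbase d F j).
have c2 : forall F p x j l (i : ImgF F p x), P0 F p x i -> forall (i0 : 0 < j < k) (e : Om (F, 1) l (p, 1) = (attach d F j, 1)),
        P (attach d F j) (om' (Bof x F) l x) (ImgTS i i0 e).
  move=> F p x j l hi IH hj hl y /ImgT_inv [[e _]|[F2 [p2 [x2 [j2 [l2 [hi2 hj2 hl2 e ->]]]]]]].
    by case: (attach_neq_Tbase e).
  have [eF ej] := attach_inj e; subst F2 j2.
  have [ep ex] := IH _ _ hi2; subst p2 x2.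
  have [hF hp hx _] := ImgF_props hi.
  have [fb _ db] := Bof_props hx hF hp.
  apply: (om_mod_eq hNo fb db); apply: (RegT hF hp); by rewrite hl hl2.
have c3 : forall F (c : codim1 F (Tbase d)), P0 F (Tbase d) b0 (ImgF0 c).
  move=> F c q y /ImgF_inv [[-> [-> _]] //|[G [j [_ [_ _ _ _ hf]]]]].
  by case: (Tbase_no_fresh c hf).
have c4 : forall F j F' y (i : ImgT (attach d F j) y), P (attach d F j) y i ->
        forall (t : Tface d k F) (i0 : 0 < j < k) (c : codim1 F' (attach d F j)) (i1 : fresh d F j \in F'),
        P0 F' (attach d F j) y (ImgFS i t i0 c i1).
  move=> F j F' y hi IH hF hj hc hf q y2 /ImgF_inv [[_ [_ c0]]|[G [i [-> [hi2 _ _ hc2 hf2]]]]].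
    by case: (Tbase_no_fresh c0 hf).
  have [eG ei] := fresh_par hc hf hc2 hf2; subst G i.
  by split=> //; apply: IH.
split; [exact (@ImgT_mut P P0 c1 c2 c3 c4) | exact (@ImgF_mut P P0 c1 c2 c3 c4)].
Qed.

Lemma ImgT_fun t x y : ImgT t x -> ImgT t y -> x = y.
Proof. by move=> h1 h2; case: Img_fun => h _; exact: (h _ _ h1 _ h2). Qed.

Lemma ImgF_tot F : Tface d k F -> exists p x, ImgF F p x.
Proof.
elim=> [G h|G j G' hG [p [x hi]] hj h hf]; first by exists (Tbase d), b0; constructor.
have [_ hp hx _] := ImgF_props hi.
have hb := Tface_facet hG.
have [tp [_ sp]] := par_top hp.
have dp : delta d T (G,1) (p,1) by apply/(T_delta (p,1) hb).
have da : delta d T (G,1) (attach d G j,1).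
  apply/(T_delta (attach d G j,1) hb); split; first exact: TtopS.
  split=> //; apply: subset_subseq; try by case: (Tface_inv hG).
    by apply: attach_sorted; case: (Tface_inv hG).
  by move=> z zG; rewrite mem_attach zG orbT.
have [l hl] := om_trans hOm hb dp da.
exists (attach d G j), (om' (Bof x G) l x).
exact: (ImgFS (ImgTS hi hj hl) hG hj h hf).
Qed.

Lemma ImgT_tot t : Ttop d k t -> exists x, ImgT t x.
Proof.
case=> [|G j hG hj]; first by exists b0; constructor.
have [p [x hi]] := ImgF_tot hG.
have [_ hp hx _] := ImgF_props hi.
have hb := Tface_facet hG.
have [tp [_ sp]] := par_top hp.
have dp : delta d T (G,1) (p,1) by apply/(T_delta (p,1) hb).
have da : delta d T (G,1) (attach d G j,1).
  apply/(T_delta (attach d G j,1) hb); split; first exact: TtopS.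
  split=> //; apply: subset_subseq; try by case: (Tface_inv hG).
    by apply: attach_sorted; case: (Tface_inv hG).
  by move=> z zG; rewrite mem_attach zG orbT.
have [l hl] := om_trans hOm hb dp da.
by exists (om' (Bof x G) l x); exact: (ImgTS hi hj hl).
Qed.

Definition P (t : cell) : mcell := epsilon (inhabits b0) (ImgT t).

Lemma P_spec t : Ttop d k t -> ImgT t (P t).
Proof. by move=> ht; apply: (epsilon_spec (inhabits b0) (ImgT t)); exact: ImgT_tot. Qed.

Lemma P_eq t x : ImgT t x -> P t = x.
Proof. move=> hi; have [ht _] := ImgT_props hi; exact: ImgT_fun (P_spec ht) hi. Qed.

Definition birth (v : nat) : cell :=
  if v <= d then Tbase d else
  if (unpickle (v - d.+1) : option (seq nat * nat)) is Some (F, j) then attach d F j else Tbase d.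

Lemma birth_small v : v <= d -> birth v = Tbase d.
Proof. by rewrite /birth => ->. Qed.

Lemma birth_fresh F j : birth (fresh d F j) = attach d F j.
Proof. by rewrite /birth leqNgt fresh_gtd /= /fresh addKn pickleK. Qed.

Definition fv (v : nat) : nat := colv gam' (P (birth v)).1 (Gam v).

Lemma P_Tbase : P (Tbase d) = b0.
Proof. exact: P_eq ImgT0. Qed.

Lemma FL :
  (forall t x, ImgT t x -> forall v, v \in t -> fv v = colv gam' x.1 (Gam v)) /\
  (forall F p x, ImgF F p x -> forall v, v \in p -> fv v = colv gam' x.1 (Gam v)).
Proof.
pose Q := fun t x (_ : ImgT t x) => forall v, v \in t -> fv v = colv gam' x.1 (Gam v).
pose Q0 := fun F p x (_ : ImgF F p x) => forall v, v \in p -> fv v = colv gam' x.1 (Gam v).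
have c1 : Q (Tbase d) b0 ImgT0.
  by move=> v; rewrite mem_Tbase => vd; rewrite /fv birth_small // P_Tbase.
have c2 : forall F p x j l (i : ImgF F p x), Q0 F p x i -> forall (i0 : 0 < j < k) (e : Om (F, 1) l (p, 1) = (attach d F j, 1)),
        Q (attach d F j) (om' (Bof x F) l x) (ImgTS i i0 e).
  move=> F p x j l hi IH hj hl v; rewrite mem_attach => /orP[/eqP->|vF].
    by rewrite /fv birth_fresh (P_eq (ImgTS hi hj hl)).
  have [hF hp hx _] := ImgF_props hi.
  have [fb gb db] := Bof_props hx hF hp.
  have [tp [_ sp]] := par_top hp.
  rewrite (IH v (subseq_mem sp vF)).
  have gvd := Gam_face_le hp vF.
  have [mx ex] := hx.
  have [wx gw] := colv_spec hNm hNc (top_mcX hx) ex gvd.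
  have dy := om_delta hNo l fb db.
  have [hy [_ cy]] : top_mcell d N (om' (Bof x F) l x) /\ delta d N (Bof x F) (om' (Bof x F) l x).
    by split=> //; case: dy.
  symmetry; apply: (colv_unique hNm hNc (top_mcX hy)); first by case: hy.
    apply: (subseq_mem (cont_sub cy)); rewrite /= mem_filter wx andbT gw.
    exact: map_f.
  exact: gw.
have c3 : forall F (c : codim1 F (Tbase d)), Q0 F (Tbase d) b0 (ImgF0 c).
  by move=> F c v; rewrite mem_Tbase => vd; rewrite /fv birth_small // P_Tbase.
have c4 : forall F j F' y (i : ImgT (attach d F j) y), Q (attach d F j) y i ->
        forall (t : Tface d k F) (i0 : 0 < j < k) (c : codim1 F' (attach d F j)) (i1 : fresh d F j \in F'),
        Q0 F' (attach d F j) y (ImgFS i t i0 c i1).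
  by move=> F j F' y hi IH *; exact: IH.
split; [exact (@ImgT_mut Q Q0 c1 c2 c3 c4) | exact (@ImgF_mut Q Q0 c1 c2 c3 c4)].
Qed.

Lemma FLT t x v : ImgT t x -> v \in t -> fv v = colv gam' x.1 (Gam v).
Proof. by move=> hi vt; case: FL => h _; exact: h _ _ hi v vt. Qed.

Lemma fv_in t x v : ImgT t x -> v \in t -> fv v \in x.1 /\ gam' (fv v) = Gam v.
Proof.
move=> hi vt; have [tt [mx ex]] := ImgT_props hi; have [_ et] := Ttop_inv tt.
rewrite (FLT hi vt); apply: (colv_spec hNm hNc (top_mcX (conj mx ex)) ex).
exact: (col_le hTm hGam (Ttop_mcX tt) vt).
Qed.

Lemma fv_inj t x : ImgT t x -> {in t &, injective fv}.
Proof.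
move=> hi u v ut vt e; have [tt _] := ImgT_props hi; have [_ et] := Ttop_inv tt.
apply: (uniq_map_inj (col_uniq hGam (Ttop_mcX tt) et) ut vt).
by rewrite -(fv_in hi ut).2 -(fv_in hi vt).2 e.
Qed.

Lemma img_top t x : ImgT t x -> img fv t = x.1.
Proof.
move=> hi; have [tt hx] := ImgT_props hi; have [mx ex] := hx; have [st et] := Ttop_inv tt.
apply: ltn_sorted_eq; first exact: img_sorted.
  by apply: (mc_sorted hNm); case: mx.
move=> w; rewrite mem_img; apply/mapP/idP => [[v vt ->]|wx]; first exact: (fv_in hi vt).1.
have cd : gam' w <= d by apply: (col_le hNm hNc (top_mcX hx) wx).
have /mapP[v vt ev] := col_all hTm hGam (Ttop_mcX tt) et cd.
exists v => //; rewrite (FLT hi vt) -ev.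
by symmetry; apply: (colv_eq hNm hNc (top_mcX hx)).
Qed.

Lemma img_sub_top t x s : ImgT t x -> subseq s t -> subseq (img fv s) x.1.
Proof.
move=> hi st; have [tt hx] := ImgT_props hi; apply: subset_subseq; first exact: img_sorted.
  by apply: (mc_sorted hNm); apply: top_mcX.
move=> w; rewrite mem_img => /mapP[v vs ->].
exact: (fv_in hi (subseq_mem st vs)).1.
Qed.

Definition bir (s : cell) : cell := birth (maxs s).

Lemma bir_Tbase s : subseq s (Tbase d) -> bir s = Tbase d.
Proof.
move=> sb; rewrite /bir birth_small //.
case: (eqVneq s [::]) => [->|ns] //.
by have := subseq_mem sb (maxs_mem ns); rewrite mem_Tbase.
Qed.

Lemma colface_sorted x F : top_mcell d N x -> sorted ltn (colface x.1 F).
Proof.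
move=> hx; apply: sorted_filter; first exact: ltn_trans.
by apply: (mc_sorted hNm); apply: top_mcX.
Qed.

Lemma CR :
  (forall t x, ImgT t x -> forall s, subseq s t -> face N x (img fv s) = face N (P (bir s)) (img fv s)) /\
  (forall F p x, ImgF F p x -> forall s, subseq s p -> face N x (img fv s) = face N (P (bir s)) (img fv s)).
Proof.
pose Q := fun t x (_ : ImgT t x) => forall s, subseq s t -> face N x (img fv s) = face N (P (bir s)) (img fv s).
pose Q0 := fun F p x (_ : ImgF F p x) => forall s, subseq s p -> face N x (img fv s) = face N (P (bir s)) (img fv s).
have c1 : Q (Tbase d) b0 ImgT0.
  by move=> s sb; rewrite bir_Tbase // P_Tbase.
have c2 : forall F p x j l (i : ImgF F p x), Q0 F p x i -> forall (i0 : 0 < j < k) (e : Om (F, 1) l (p, 1) = (attach d F j, 1)),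
        Q (attach d F j) (om' (Bof x F) l x) (ImgTS i i0 e).
  move=> F p x j l hi IH hj hl s st.
  have hiT := ImgTS hi hj hl.
  have [hF hp hx hpx] := ImgF_props hi.
  have [sF eF] := Tface_inv hF.
  have ss : sorted ltn s by apply: sorted_subseq st (attach_sorted d j sF).
  case fs: (fresh d F j \in s).
    have em : maxs s = fresh d F j.
      have ns : s != [::] by apply/eqP => e; rewrite e in fs.
      have := subseq_mem st (maxs_mem ns); rewrite mem_attach => /orP[/eqP //|mF].
      have := maxs_ub fs; have := fresh_gt d j mF; move=> h1 h2.
      by move: (leq_ltn_trans h2 h1); rewrite ltnn.
    by rewrite /bir em birth_fresh (P_eq hiT).
  have sFs : subseq s F.
    apply: subset_subseq => // v vs; have := subseq_mem st vs; rewrite mem_attach.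
    by case/orP=> [/eqP ev|//]; move: vs; rewrite ev fs.
  have [tp [_ sp]] := par_top hp.
  have sps : subseq s p := subseq_trans sFs sp.
  have [fb gb db] := Bof_props hx hF hp.
  have dy := om_delta hNo l fb db.
  have [[my ey] cy] := dy.
  have mB : is_mcell N (Bof x F) by case: fb.
  have subB : subseq (img fv s) (Bof x F).1.
    apply: subset_subseq; first exact: img_sorted.
      exact: colface_sorted.
    move=> w; rewrite mem_img => /mapP[v vs ->].
    have vp := subseq_mem sps vs.
    rewrite (FLT hpx vp) /= mem_filter.
    have [wx gw] := colv_spec hNm hNc (top_mcX hx) (proj2 hx) (Gam_face_le hp (subseq_mem sFs vs)).
    by rewrite wx andbT gw; apply: map_f; exact: subseq_mem sFs vs.
  have [cB ecB] := face_spec hNm mB subB.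
  have e1 : face N (om' (Bof x F) l x) (img fv s) = face N (Bof x F) (img fv s).
    have c1' : contained N (face N (Bof x F) (img fv s)) (om' (Bof x F) l x) by apply: rt_trans cB cy.
    by have := faceU hNm my c1'; rewrite ecB.
  have e2 : face N x (img fv s) = face N (Bof x F) (img fv s).
    have c2' : contained N (face N (Bof x F) (img fv s)) x by apply: rt_trans cB _; exact: rt_step.
    by have := faceU hNm (proj1 hx) c2'; rewrite ecB.
  by rewrite e1 -e2; apply: IH.
have c3 : forall F (c : codim1 F (Tbase d)), Q0 F (Tbase d) b0 (ImgF0 c).
  by move=> F c s sb; rewrite bir_Tbase // P_Tbase.
have c4 : forall F j F' y (i : ImgT (attach d F j) y), Q (attach d F j) y i ->
        forall (t : Tface d k F) (i0 : 0 < j < k) (c : codim1 F' (attach d F j)) (i1 : fresh d F j \in F'),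
        Q0 F' (attach d F j) y (ImgFS i t i0 c i1).
  by move=> F j F' y hi IH *; exact: IH.
split; [exact (@ImgT_mut Q Q0 c1 c2 c3 c4) | exact (@ImgF_mut Q Q0 c1 c2 c3 c4)].
Qed.

Definition phi (a : mcell) : mcell := face N (P (bir a.1)) (img fv a.1).

Lemma phi_top t x s r : ImgT t x -> subseq s t ->
  [/\ phi (s,r) = face N x (img fv s), contained N (phi (s,r)) x & (phi (s,r)).1 = img fv s].
Proof.
move=> hi st; have [_ hx] := ImgT_props hi.
have e : phi (s,r) = face N x (img fv s) by case: CR => h _; rewrite (h _ _ hi s st).
have [h1 h2] := face_spec hNm (proj1 hx) (img_sub_top hi st).
by rewrite e.
Qed.

Lemma mcell_top a : is_mcell T a -> exists t, [/\ Ttop d k t, subseq a.1 t & a.2 = 1].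
Proof. by move/Tmc_mcell => [[t [ht st]] e]; exists t. Qed.

Lemma phi_top_eq t x : ImgT t x -> phi (t,1) = x.
Proof.
move=> hi; have [e _ _] := phi_top 1 hi (subseq_refl t); rewrite e (img_top hi).
have [_ hx] := ImgT_props hi; apply: (faceU hNm (proj1 hx)); exact: rt_refl.
Qed.

Lemma imgF_colface F p x : ImgF F p x -> img fv F = colface x.1 F.
Proof.
move=> hi; have [hF hp hx hpx] := ImgF_props hi; have [tp [_ sp]] := par_top hp.
have [sF eF] := Tface_inv hF.
apply: ltn_sorted_eq; [exact: img_sorted | exact: colface_sorted |].
apply: uniq_subset_size_eq; first exact: sorted_ltn_uniq (img_sorted _ _).
  move=> w; rewrite mem_img => /mapP[v vs ->].
  rewrite (FLT hpx (subseq_mem sp vs)) /= mem_filter.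
  have [wx gw] := colv_spec hNm hNc (top_mcX hx) (proj2 hx) (Gam_face_le hp vs).
  by rewrite wx andbT gw; apply: map_f.
rewrite size_img; first by case: (colface_codim1 hx hF hp) => e _; move: e; rewrite (proj2 hx) eF => [[->]].
  exact: sorted_ltn_uniq.
exact: inj_sub sp (fv_inj hpx).
Qed.

Lemma phi_facet F p x : ImgF F p x -> phi (F,1) = Bof x F.
Proof.
move=> hi; have [hF hp hx hpx] := ImgF_props hi; have [tp [_ sp]] := par_top hp.
have [e _ _] := phi_top 1 hpx sp; rewrite e (imgF_colface hi).
have [_ gb _] := Bof_props hx hF hp.
by apply: (faceU hNm (proj1 hx) (rt_step _ _ _ _ gb)).
Qed.

Lemma delta_rep F p x t : ImgF F p x -> delta d T (F,1) (t,1) ->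
  exists l, Om (F,1) l (p,1) = (t,1) /\ phi (t,1) = om' (Bof x F) l x.
Proof.
move=> hi; have [hF hp hx hpx] := ImgF_props hi.
have hb := Tface_facet hF; move=> dt0; have /= [tt [_ st]] := (T_delta (t,1) hb).1 dt0.
have [tp [_ sp]] := par_top hp.
have dp : delta d T (F,1) (p,1) by apply/(T_delta (p,1) hb).
have [fb _ db] := Bof_props hx hF hp.
case: (tops_of_face hF hp tt st) => [->|[j [hj et]]].
  exists 0; rewrite (om_0 hOm hb dp) (om_0 hNo fb db); split=> //.
  exact: phi_top_eq.
have dt : delta d T (F,1) (t,1) by apply/(T_delta (t,1) hb).
have [l hl] := om_trans hOm hb dp dt.
exists l; split=> //; rewrite et in hl *.
exact: phi_top_eq (ImgTS hi hj hl).
Qed.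

Lemma phi_morphism : is_morphism d k T Gam Om (Tinit d) N gam' om' b0 phi.
Proof.
have cellp : forall a, is_mcell T a ->
    [/\ is_mcell N (phi a), (phi a).1 = img fv a.1 & size (phi a).1 = size a.1].
  move=> a /mcell_top [t [tt st e2]]; case: a st e2 => s r /= st _.
  have hi := P_spec tt; have [_ hx] := ImgT_props hi.
  have [_ c e] := phi_top r hi st.
  split=> //; first exact: (cont_mcell hNm (proj1 hx) c).
  rewrite e size_img //; first by apply: sorted_ltn_uniq; apply: sorted_subseq st (proj1 (Ttop_inv tt)).
  exact: inj_sub st (fv_inj hi).
exists fv; split; first split.
- move=> s hs; have /cellp [[h1 _] e _] : is_mcell T (s,1) by apply/Tmc_mcell.
  by rewrite -e.
- exact: cellp.
- move=> a s ma [es ss]; have [t [tt st e2]] := mcell_top ma.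
  have hi := P_spec tt; have [_ hx] := ImgT_props hi.
  have sst : subseq s t := subseq_trans ss st.
  rewrite /glue /= [mcg _ _ _]/=.
  have [e1 c1 f1] := phi_top 1 hi sst.
  rewrite e1; case: a ma ss es st e2 => s0 r0 ma /= ss es st ->.
  have [_ c0 f0] := phi_top 1 hi st.
  have [m0 _ _] := cellp _ ma.
  have cd : codim1 (img fv s) (phi (s0,1)).1.
    have ui : {in t &, injective fv} := fv_inj hi.
    have [sst0 _] := Ttop_inv tt.
    split.
      rewrite f0 !size_img ?es //.
      - by apply: sorted_ltn_uniq; apply: (sorted_subseq sst sst0).
      - exact: (inj_sub sst ui).
      - by apply: sorted_ltn_uniq; apply: (sorted_subseq st sst0).
      - exact: (inj_sub st ui).
    rewrite f0; apply: subset_subseq; try exact: img_sorted.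
    by move=> w; rewrite !mem_img => /mapP[v vs ->]; apply: map_f; exact: subseq_mem ss vs.
  have g := glue_gstep m0 cd.
  have cc : contained N (glue N (phi (s0,1)) (img fv s)) (P t).
    by apply: rt_trans c0; exact: rt_step.
  by have := faceU hNm (proj1 hx) cc.
- have [e _ _] := phi_top 1 ImgT0 (subseq_refl _).
  rewrite /Tinit e (img_top ImgT0); apply: (faceU hNm (proj1 hb0)); exact: rt_refl.
split.
- move=> a ma; have [_ e _] := cellp _ ma; rewrite e img_comp.
  have [t [tt st _]] := mcell_top ma; have hi := P_spec tt.
  apply: img_eq_in => v vs /=; exact: (fv_in hi (subseq_mem st vs)).2.
- move=> b a l hb da.
  have [hF e2] := T_facet hb; case: b hb da hF e2 => F r hb da /= hF e2; subst r.
  have [p [x hi]] := ImgF_tot hF.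
  have [_ hp hx hpx] := ImgF_props hi.
  have [fb _ db] := Bof_props hx hF hp.
  have [tp [_ sp]] := par_top hp.
  have dp : delta d T (F,1) (p,1) by apply/(T_delta (p,1) hb).
  case: a da => ta ra da; have ra1 : ra = 1 by case: da => /T_top [_ e].
  subst ra.
  have [la [hla pa]] := delta_rep hi da.
  have da2 := om_delta hOm l hb da.
  have [ta2 ea2'] : exists ta2, Om (F,1) l (ta,1) = (ta2,1).
    exists (Om (F,1) l (ta,1)).1; case: da2 => /T_top [_ e] _.
    by case: (Om (F,1) l (ta,1)) e => ? ? /= ->.
  rewrite ea2' in da2 *.
  have [l2 [hl2 pa2]] := delta_rep hi da2.
  rewrite pa2 (phi_facet hi) pa -(om_add hNo _ _ fb db).
  apply: (om_mod_eq hNo fb db); apply: (RegT hF hp).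
  by rewrite hl2 (om_add hOm _ _ hb dp) hla.
Qed.

Lemma phi_unique psi : is_morphism d k T Gam Om (Tinit d) N gam' om' b0 psi ->
  forall a, is_mcell T a -> psi a = phi a.
Proof.
case=> g [[hsimp hcell hglue hroot] [hcol hord]].
have gcol : forall v, Tcell d k [:: v] -> gam' (g v) = Gam v.
  move=> v hv; have mv : is_mcell T ([:: v],1) by apply/Tmc_mcell.
  have := hcol _ mv; have [_ e _] := hcell _ mv; rewrite e /=.
  by rewrite /img /= => [[]].
have gtop : forall t x v, ImgT t x -> psi (t,1) = x -> v \in t -> g v = fv v.
  move=> t x v hi ex vt; have [tt hx] := ImgT_props hi.
  have mt : is_mcell T (t,1) by apply/Tmc_mcell; split=> //; exact: Ttop_Tcell.
  have [_ e _] := hcell _ mt; rewrite ex /= in e.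
  have gx : g v \in x.1 by rewrite e mem_img; apply: map_f.
  rewrite (FLT hi vt); symmetry; apply: (colv_unique hNm hNc (top_mcX hx) (proj2 hx) gx).
  apply: gcol; exists t; split=> //; by rewrite sub1seq.
have mstep : forall b a, gstep T b a -> gstep N (psi b) (psi a).
  move=> b a [ma [s [cs eb]]]; rewrite eb (hglue _ _ ma cs); apply: glue_gstep.
    by case: (hcell _ ma).
  have mb : is_mcell T (glue T a s) by apply: (glue_mcell hTm ma cs).
  have [_ e1 z1] := hcell _ mb; have [_ e2 z2] := hcell _ ma.
  have zs : size (img g s) = size s by rewrite -e1 z1.
  split; first by rewrite z2 zs; case: cs.
  rewrite e2; apply: subset_subseq; try exact: img_sorted.
  by move=> w; rewrite !mem_img => /mapP[v vs ->]; apply: map_f; case: cs => _ /subseq_mem; apply.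
have mcont : forall b a, contained T b a -> contained N (psi b) (psi a).
  move=> b a; elim=> [x y /mstep h| x | x y z _ h1 _ h2]; first exact: rt_step.
    exact: rt_refl.
  exact: rt_trans h1 h2.
have ptop : forall t x, ImgT t x -> psi (t,1) = x.
  pose Q := fun t x (_ : ImgT t x) => psi (t,1) = x.
  pose Q0 := fun F p x (_ : ImgF F p x) => psi (p,1) = x.
  have c1 : Q (Tbase d) b0 ImgT0 by exact: hroot.
  have c2 : forall F p x j l (i : ImgF F p x), Q0 F p x i -> forall (i0 : 0 < j < k) (e : Om (F, 1) l (p, 1) = (attach d F j, 1)),
          Q (attach d F j) (om' (Bof x F) l x) (ImgTS i i0 e).
    move=> F p x j l hi IH hj hl; rewrite /Q -hl.
    have [hF hp hx hpx] := ImgF_props hi.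
    have hb := Tface_facet hF; have [tp cp] := par_top hp; have [_ sp] := cp.
    have dp : delta d T (F,1) (p,1) by apply/(T_delta (p,1) hb).
    rewrite (hord _ _ _ hb dp) IH; congr om'.
    have mp : is_mcell T (p,1) by apply/Tmc_mcell; split=> //; exact: Ttop_Tcell.
    have -> : ((F,1) : mcell) = glue T (p,1) F by [].
    rewrite (hglue _ _ mp cp) IH /Bof -(imgF_colface hi); congr glue.
    apply: img_eq_in => v vF; exact: gtop hpx IH (subseq_mem sp vF).
  have c3 : forall F (c : codim1 F (Tbase d)), Q0 F (Tbase d) b0 (ImgF0 c) by move=> *; exact: hroot.
  have c4 : forall F j F' y (i : ImgT (attach d F j) y), Q (attach d F j) y i ->
          forall (t : Tface d k F) (i0 : 0 < j < k) (c : codim1 F' (attach d F j)) (i1 : fresh d F j \in F'),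
          Q0 F' (attach d F j) y (ImgFS i t i0 c i1) by move=> *.
  exact (@ImgT_mut Q Q0 c1 c2 c3 c4).
move=> a ma; have [t [tt st e2]] := mcell_top ma.
case: a ma st e2 => s r ma /= st e2; subst r.
have hi := P_spec tt; have [_ hx] := ImgT_props hi.
have pt := ptop _ _ hi.
have mt : is_mcell T (t,1) by apply/Tmc_mcell; split=> //; exact: Ttop_Tcell.
have c := mcont _ _ (T_cont (Ttop_Tcell tt) st); rewrite pt in c.
have [e _ _] := phi_top 1 hi st; rewrite e.
have [_ es _] := hcell _ ma; rewrite /= in es.
rewrite -(faceU hNm (proj1 hx) c) es; congr face.
apply: img_eq_in => v vs; exact: gtop hi pt (subseq_mem st vs).
Qed.

End Univ.

Theorem proposition5 (d k : nat) (Gam : nat -> nat) (Om : ordering) :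
  1 <= d -> 1 <= k ->
  is_coloring d (Tmc d k) Gam ->
  is_k_ordering d k (Tmc d k) Om ->
  is_object d k (Tmc d k) Gam Om (Tinit d) /\
  (forall (N : mcx) (gam' : nat -> nat) (om' : ordering) (b0 : mcell),
     is_object d k N gam' om' b0 ->
     exists phi : mcell -> mcell,
       is_morphism d k (Tmc d k) Gam Om (Tinit d) N gam' om' b0 phi /\
       forall psi : mcell -> mcell,
         is_morphism d k (Tmc d k) Gam Om (Tinit d) N gam' om' b0 psi ->
         forall a, is_mcell (Tmc d k) a -> psi a = phi a).
Proof.
move=> d1 k1 hGam hOm; split.
  split; split.
  - exact: Tmc_multi.
  - exact: T_pure.
  - by exists Gam.
  - exact: T_lpc.
  - exact: T_degree.
  - exact: hGam.
  - exact: hOm.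
  - by apply/T_top; split=> //; constructor.
move=> N gam' om' b0 hN.
exists (phi d k Gam Om N gam' om' b0); split.
  exact: (phi_morphism k1 hGam hOm hN).
move=> psi hpsi a ma; exact: (phi_unique k1 hGam hOm hN hpsi ma).
Qed.
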